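(* Let $\{a_n\}_{n\geq 0}$ be a sequence of non-negative real numbers and let $0<p<1$. If $\{a^p_n\}_{n\geq 0}$ converges to a finite limit $a\in\mathbb{R}$, then $a_n=O(\sqrt{n})$.
   Context: $a^p_n=\sum_{i=0}^n\binom{n}{i}p^i(1-p)^{n-i}a_i$. For $f,g:\mathbb{N}\to\mathbb{R}^+_0$, $f(n)=O(g(n))$ means there is $C>0$ with $f(n)\leq Cg(n)$ for all sufficiently large $n$. *)

(* Defs.v *)
From Stdlib Require Import Reals.
Open Scope R_scope.

Definition binom_transform (p : R) (a : nat -> R) (n : nat) : R :=
  sum_f_R0 (fun i => Binomial.C n i * p ^ i * (1 - p) ^ (n - i) * a i) n.

Definition bigO_nat (f g : nat -> R) : Prop :=
  exists C : R, 0 < C /\ exists N : nat, forall n : nat, (N <= n)%nat -> f n <= C * g n.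

(* Main.v *)
Require Import Defs.
From Stdlib Require Import Reals Lra Lia Arith Factorial ZArith.
Open Scope R_scope.

Fixpoint bb (p : R) (n j : nat) : R :=
  match n with
  | O => match j with O => 1 | S _ => 0 end
  | S n' => match j with
            | O => (1-p) * bb p n' O
            | S j' => p * bb p n' j' + (1-p) * bb p n' (S j')
            end
  end.

Lemma bb_zero p n j : (n < j)%nat -> bb p n j = 0.
Proof.
  revert j; induction n; intros j H; destruct j; try lia; simpl; auto.
  rewrite !IHn by lia. ring.
Qed.

Lemma bb_closed p n j : (j <= n)%nat -> bb p n j = C n j * p ^ j * (1-p) ^ (n-j).
Proof.
  revert j; induction n; intros j H.
  - destruct j; [|lia]. unfold C; simpl. field.
  - destruct j.
    + simpl bb. rewrite IHn by lia. unfold C. rewrite !Nat.sub_0_r.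
      replace (S n - 0)%nat with (S n) by lia.
      pose proof (not_0_INR _ (fact_neq_0 n)). pose proof (not_0_INR _ (fact_neq_0 (S n))).
      change (fact 0) with 1%nat. change (INR 1) with 1. simpl pow. unfold Rdiv; rewrite !Rmult_1_l, !Rinv_r by auto; ring.
    + simpl bb. destruct (Nat.eq_dec j n) as [->|Hj].
      * rewrite (bb_zero p n (S n)) by lia. rewrite IHn by lia.
        unfold C. rewrite !Nat.sub_diag.
        pose proof (not_0_INR _ (fact_neq_0 n)). pose proof (not_0_INR _ (fact_neq_0 (S n))).
        change (fact 0) with 1%nat. change (INR 1) with 1. simpl pow.
        unfold Rdiv; rewrite !Rmult_1_r, !Rinv_r by auto; ring.
      * rewrite !IHn by lia. rewrite <- pascal by lia.
        replace (S n - S j)%nat with (n - j)%nat by lia.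
        replace (n - j)%nat with (S (n - S j)) by lia. simpl. ring.
Qed.

Lemma bb_nonneg p n j : 0 <= p <= 1 -> 0 <= bb p n j.
Proof.
  intros Hp; revert j; induction n; intros j; destruct j; simpl; try lra.
  - specialize (IHn 0%nat). nra.
  - specialize (IHn j) as H1. specialize (IHn (S j)) as H2. nra.
Qed.

Lemma plus_sum' (A B : nat -> R) N : sum_f_R0 (fun i => A i + B i) N = sum_f_R0 A N + sum_f_R0 B N.
Proof. induction N; simpl; [ring| rewrite IHN; ring]. Qed.

Lemma scal_sum' (A : nat -> R) N x : sum_f_R0 (fun i => x * A i) N = x * sum_f_R0 A N.
Proof. induction N; simpl; [ring| rewrite IHN; ring]. Qed.

Lemma E_rec p (f : nat -> R) n :
  sum_f_R0 (fun j => bb p (S n) j * f j) (S n) =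
  p * sum_f_R0 (fun j => bb p n j * f (S j)) n + (1-p) * sum_f_R0 (fun j => bb p n j * f j) n.
Proof.
  rewrite decomp_sum by lia. simpl pred.
  rewrite (sum_eq _ (fun i => p * (bb p n i * f (S i)) + (1-p) * (bb p n (S i) * f (S i))))
    by (intros; simpl; ring).
  rewrite plus_sum', !scal_sum'.
  assert (H : sum_f_R0 (fun j => bb p n j * f j) (S n) =
     bb p n 0 * f 0%nat + sum_f_R0 (fun i => bb p n (S i) * f (S i)) n).
  { rewrite decomp_sum by lia. reflexivity. }
  rewrite tech5, (bb_zero p n (S n)) in H by lia.
  change (bb p (S n) 0) with ((1-p) * bb p n 0). rewrite Rmult_0_l, Rplus_0_r in H. rewrite H. ring.
Qed.

Lemma moment p n al be c :
  sum_f_R0 (fun j => bb p n j * (al + be * (INR j - c)^2)) n =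
  al + be * (INR n * p * (1-p) + (INR n * p - c)^2).
Proof.
  revert c; induction n; intros c.
  - simpl. ring.
  - rewrite E_rec.
    rewrite (sum_eq _ (fun j => bb p n j * (al + be * (INR j - (c - 1))^2))).
    2:{ intros; rewrite S_INR; f_equal; ring. }
    rewrite !IHn. rewrite S_INR. ring.
Qed.

Lemma ratio p n k : (k < n)%nat ->
  bb p n (S k) * (INR k + 1) * (1-p) = bb p n k * (INR n - INR k) * p.
Proof.
  intros H. rewrite !bb_closed by lia. rewrite pascal_step3 by lia.
  rewrite S_INR, minus_INR by lia.
  replace (n - k)%nat with (S (n - S k)) by lia. cbn [pow].
  field. pose proof (pos_INR k). lra.
Qed.

Lemma up_mono p n i : 0 < p < 1 -> INR n * p <= INR i ->
  forall d, bb p n (i + d) <= bb p n i.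
Proof.
  intros Hp Hi d; induction d.
  - rewrite Nat.add_0_r; lra.
  - eapply Rle_trans; [|exact IHd].
    destruct (lt_dec (i + d) n) as [Hl|Hl].
    + pose proof (ratio p n (i+d) Hl) as R.
      replace (i + S d)%nat with (S (i + d)) by lia.
      pose proof (bb_nonneg p n (S (i+d)) ltac:(lra)).
      pose proof (bb_nonneg p n (i+d) ltac:(lra)).
      rewrite plus_INR in *. pose proof (pos_INR d).
      set (b1 := bb p n (S (i + d))) in *. set (b0 := bb p n (i + d)) in *.
      assert (Hk : (INR n - (INR i + INR d)) * p <= (INR i + INR d + 1) * (1 - p)) by nra.
      assert (Hpos : 0 < (INR i + INR d + 1) * (1 - p)) by (pose proof (pos_INR i); nra).
      assert (HH : b1 * ((INR i + INR d + 1) * (1 - p)) <= b0 * ((INR i + INR d + 1) * (1 - p))) by nra.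
      apply Rmult_le_reg_r in HH; auto.
    + rewrite bb_zero by lia. apply bb_nonneg; lra.
Qed.

Lemma down_mono p n i : 0 < p < 1 -> (1 <= n)%nat -> INR i <= INR n * p + 1 -> (i <= n)%nat ->
  forall d, (d <= i)%nat -> bb p n (i - d) <= (1 + / (INR n * p)) ^ d * bb p n i.
Proof.
  intros Hp Hn Hi Hin d; induction d; intros Hd.
  - rewrite Nat.sub_0_r; simpl; lra.
  - set (k := (i - S d)%nat).
    assert (Hk1 : (S k = i - d)%nat) by (unfold k; lia).
    assert (Hkn : (k < n)%nat) by (unfold k; lia).
    pose proof (ratio p n k Hkn) as R. rewrite Hk1 in R.
    assert (HnR : 1 <= INR n) by (apply (le_INR 1); lia).
    assert (HkR : INR k + 1 <= INR i) by (rewrite <- S_INR; apply le_INR; unfold k; lia).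
    pose proof (bb_nonneg p n k ltac:(lra)). pose proof (bb_nonneg p n (i - d) ltac:(lra)).
    pose proof (bb_nonneg p n i ltac:(lra)).
    specialize (IHd ltac:(lia)).
    simpl pow.
    set (x := / (INR n * p)) in *.
    assert (Hx : x * (INR n * p) = 1) by (unfold x; field; split; lra).
    assert (Hx0 : 0 < x) by (unfold x; apply Rinv_0_lt_compat; nra).
    set (b1 := bb p n (i - d)) in *. set (b0 := bb p n k) in *.
    assert (Hstep : b0 <= (1 + x) * b1).
    { assert (HknR : INR k < INR n) by (apply lt_INR; auto).
      assert (Hnk : 0 < (INR n - INR k) * p) by nra.
      assert (Hineq : (INR k + 1) * (1 - p) <= (1 + x) * ((INR n - INR k) * p)).
      { assert (E : (1 + x) * ((INR n - INR k) * p) = (INR n - INR k) * p + x * (INR n - INR k) * p) by ring.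
        rewrite E.
        assert (E2 : x * (INR n - INR k) * p = (INR n - INR k) * / INR n).
        { unfold x. field. split; lra. }
        rewrite E2.
        assert (Hy : / INR n * INR n = 1) by (field; lra).
        assert (0 < / INR n) by (apply Rinv_0_lt_compat; lra).
        nra. }
      apply (Rmult_le_reg_r ((INR n - INR k) * p)); auto. nra. }
    assert (0 <= (1 + x) ^ d) by (apply pow_le; lra).
    nra.
Qed.

Lemma pow_exp x d : 0 <= x -> (1 + x) ^ d <= exp (INR d * x).
Proof.
  intros Hx; induction d.
  - simpl. rewrite Rmult_0_l, exp_0. lra.
  - rewrite S_INR. replace ((INR d + 1) * x) with (INR d * x + x) by ring.
    rewrite exp_plus. simpl.
    assert (1 + x <= exp x).
    { destruct (Req_dec x 0) as [->|H]; [rewrite exp_0; lra| left; apply exp_ineq1; auto]. }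
    assert (0 <= (1 + x) ^ d) by (apply pow_le; lra).
    pose proof (exp_pos (INR d * x)). nra.
Qed.

Lemma tele (F : nat -> R) N : sum_f_R0 (fun j => F (S j) - F j) N = F (S N) - F 0%nat.
Proof. induction N; simpl; [ring| rewrite IHN; ring]. Qed.

Definition indw (x r : R) (j : nat) : R := if Rle_dec (Rabs (INR j - x)) r then 1 else 0.

Lemma count x r N : 0 <= r -> sum_f_R0 (indw x r) N <= 2 * r + 1.
Proof.
  intros Hr.
  set (F := fun t : nat => Rmin (2*r+1) (Rmax 0 (INR t - x + r))).
  assert (H : sum_f_R0 (indw x r) N <= sum_f_R0 (fun j => F (S j) - F j) N).
  { apply sum_Rle. intros j _. unfold indw, F. rewrite S_INR.
    unfold Rmin, Rmax, Rabs.
    repeat (destruct Rle_dec || destruct Rcase_abs); lra. }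
  rewrite tele in H. unfold F at 2 in H.
  assert (F (S N) <= 2*r+1) by (unfold F; apply Rmin_l).
  assert (0 <= Rmin (2*r+1) (Rmax 0 (INR 0 - x + r))).
  { unfold Rmin, Rmax. repeat destruct Rle_dec; lra. }
  lra.
Qed.

Lemma term_le (f : nat -> R) n i : (forall j, 0 <= f j) -> (i <= n)%nat -> f i <= sum_f_R0 f n.
Proof.
  intros Hf; induction n; intros H.
  - replace i with 0%nat by lia. simpl; lra.
  - simpl. destruct (Nat.eq_dec i (S n)) as [->|Hne].
    + assert (0 <= sum_f_R0 f n) by (apply cond_pos_sum; auto). lra.
    + specialize (IHn ltac:(lia)). specialize (Hf (S n)). lra.
Qed.

Lemma key p n i : 0 < p < 1 -> (1 <= n)%nat -> INR n * p <= INR i <= INR n * p + 1 -> (i <= n)%nat ->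
  3/4 <= exp (2/p) * bb p n i * (2 * sqrt (INR n) + 1).
Proof.
  intros Hp Hn Hi Hin.
  assert (HnR : 1 <= INR n) by (apply (le_INR 1); lia).
  set (s := sqrt (INR n)).
  assert (Hss : s * s = INR n) by (apply sqrt_sqrt; lra).
  assert (Hs1 : 1 <= s) by (rewrite <- sqrt_1; apply sqrt_le_1; lra).
  assert (Hsn : s <= INR n) by (rewrite <- Hss; pose proof (Rmult_le_compat_l s 1 s ltac:(lra) Hs1); lra).
  set (K := exp (2/p)).
  assert (HK : 1 <= K).
  { unfold K. rewrite <- exp_0. left; apply exp_increasing; apply Rdiv_lt_0_compat; lra. }
  pose proof (bb_nonneg p n i ltac:(lra)) as Hbi.
  (* Chebyshev *)
  assert (Hch : 3/4 <= sum_f_R0 (fun j => bb p n j * indw (INR n * p) s j) n).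
  { pose proof (moment p n 1 (- / INR n) (INR n * p)) as M.
    replace (INR n * p - INR n * p) with 0 in M by ring.
    assert (E : 1 + - / INR n * (INR n * p * (1 - p) + 0 ^ 2) = 1 - p * (1-p)) by (field; lra).
    rewrite E in M.
    assert (1 - p * (1 - p) >= 3/4) by (pose proof (pow2_ge_0 (p - 1/2)); nra).
    assert (sum_f_R0 (fun j => bb p n j * (1 + - / INR n * (INR j - INR n * p) ^ 2)) n <=
            sum_f_R0 (fun j => bb p n j * indw (INR n * p) s j) n).
    { apply sum_Rle. intros j _. pose proof (bb_nonneg p n j ltac:(lra)).
      apply Rmult_le_compat_l; auto. unfold indw.
      assert (Ht : / INR n * INR n = 1) by (field; lra).
      assert (0 < / INR n) by (apply Rinv_0_lt_compat; lra).
      destruct Rle_dec as [Hl|Hl].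
      - assert (0 <= (INR j - INR n * p)^2) by (apply pow2_ge_0). nra.
      - assert (Ha : s < Rabs (INR j - INR n * p)) by lra.
        assert (Hsq : INR n < (INR j - INR n * p) ^ 2).
        { rewrite <- (pow2_abs (INR j - INR n * p)).
          pose proof (Rabs_pos (INR j - INR n * p)).
          assert (s * s < Rabs (INR j - INR n * p) ^ 2) by nra. lra. }
        nra. }
    lra. }
  assert (Hpt : forall j, (j <= n)%nat -> bb p n j * indw (INR n * p) s j <= K * bb p n i * indw (INR n * p) s j).
  { intros j Hj. unfold indw. destruct Rle_dec as [Hl|Hl]; [|lra].
    rewrite !Rmult_1_r.
    destruct (le_lt_dec i j) as [Hij|Hij].
    - replace j with (i + (j - i))%nat by lia. pose proof (up_mono p n i Hp ltac:(lra) (j - i)). nra.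
    - pose proof (down_mono p n i Hp Hn (proj2 Hi) Hin (i - j) ltac:(lia)) as D.
      replace (i - (i - j))%nat with j in D by lia.
      pose proof (pow_exp (/ (INR n * p)) (i - j) ltac:(left; apply Rinv_0_lt_compat; nra)) as PE.
      assert (Hd : INR (i - j) <= s + 1).
      { rewrite minus_INR by lia. revert Hl; unfold Rabs; destruct Rcase_abs; lra. }
      assert (HE : INR (i - j) * / (INR n * p) <= 2 / p).
      { assert (INR (i - j) <= 2 * INR n) by lra.
        assert (0 < / (INR n * p)) by (apply Rinv_0_lt_compat; nra).
        replace (2 / p) with (2 * INR n * / (INR n * p)) by (field; lra).
        nra. }
      assert (exp (INR (i - j) * / (INR n * p)) <= K).
      { unfold K. destruct (Rle_lt_or_eq_dec _ _ HE) as [h|h]; [left; apply exp_increasing; auto| rewrite h; lra]. }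
      assert (0 <= (1 + / (INR n * p)) ^ (i - j)) by (apply pow_le; left; apply Rplus_lt_le_0_compat; [lra| left; apply Rinv_0_lt_compat; nra]).
      nra. }
  apply sum_Rle in Hpt.
  rewrite scal_sum' in Hpt.
  pose proof (count (INR n * p) s n ltac:(lra)) as Hc.
  assert (0 <= K * bb p n i) by nra.
  assert (K * bb p n i * sum_f_R0 (indw (INR n * p) s) n <= K * bb p n i * (2 * s + 1)) by (apply Rmult_le_compat_l; auto).
  fold K. lra.
Qed.

Lemma floor_ex (r : R) : 0 <= r -> exists n : nat, INR n <= r < INR n + 1.
Proof.
  intros Hr. destruct (archimed r) as [H1 H2].
  assert (Hz : (0 <= up r - 1)%Z).
  { assert (IZR (up r - 1) > -1) by (rewrite minus_IZR; simpl; lra).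
    apply lt_IZR in H. lia. }
  exists (Z.to_nat (up r - 1)).
  rewrite INR_IZR_INZ, Z2Nat.id by auto. rewrite minus_IZR. simpl. lra.
Qed.

Theorem lemma6 (a : nat -> R) (p : R) (l : R) :
  (forall n : nat, 0 <= a n) ->
  0 < p < 1 ->
  Un_cv (binom_transform p a) l ->
  bigO_nat a (fun n => sqrt (INR n)).
Proof.
  intros Ha Hp Hcv.
  destruct (Hcv 1 ltac:(lra)) as [N HN].
  set (M := Rabs l + 1).
  assert (HM : forall n, (n >= N)%nat -> binom_transform p a n <= M).
  { intros n Hn. specialize (HN n Hn). unfold R_dist in HN. unfold M.
    revert HN; unfold Rabs; repeat destruct Rcase_abs; lra. }
  set (K := exp (2/p)).
  set (Cst := M * K * (4/3) * (2 * sqrt (/ p) + 1)).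
  exists Cst. split.
  { unfold Cst, M, K. pose proof (Rabs_pos l). pose proof (exp_pos (2/p)).
    pose proof (sqrt_pos (/p)). apply Rmult_lt_0_compat; [|lra].
    apply Rmult_lt_0_compat; [|lra]. apply Rmult_lt_0_compat; lra. }
  exists (Nat.max N 1). intros i Hi.
  assert (HiR : 1 <= INR i) by (apply (le_INR 1); lia).
  destruct (floor_ex (INR i / p)) as [n [Hn1 Hn2]].
  { unfold Rdiv; apply Rmult_le_pos; [apply pos_INR| left; apply Rinv_0_lt_compat; lra]. }
  assert (Hnp1 : INR n * p <= INR i).
  { replace (INR i) with (INR i / p * p) by (field; lra). apply Rmult_le_compat_r; lra. }
  assert (Hnp2 : INR i < INR n * p + p).
  { replace (INR i) with (INR i / p * p) by (field; lra).
    replace (INR n * p + p) with ((INR n + 1) * p) by ring. apply Rmult_lt_compat_r; lra. }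
  assert (Hin : (i <= n)%nat).
  { assert (INR i < INR (S n)) by (rewrite S_INR; pose proof (pos_INR n); nra).
    apply INR_lt in H. lia. }
  pose proof (key p n i Hp ltac:(lia) ltac:(lra) Hin) as Hk. fold K in Hk.
  assert (Hb : bb p n i * a i <= M).
  { eapply Rle_trans; [|apply (HM n); lia].
    unfold binom_transform.
    rewrite (sum_eq _ (fun j => bb p n j * a j)).
    2:{ intros j Hj. rewrite bb_closed by auto. reflexivity. }
    apply (term_le (fun j => bb p n j * a j)); auto.
    intros j; apply Rmult_le_pos; [apply bb_nonneg; lra| auto]. }
  set (s := sqrt (INR n)) in *.
  assert (Hs : s <= sqrt (INR i) * sqrt (/ p)).
  { rewrite <- sqrt_mult by (try left; try apply Rinv_0_lt_compat; lra).
    apply sqrt_le_1; [apply pos_INR| |].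
    - apply Rmult_le_pos; [lra| left; apply Rinv_0_lt_compat; lra].
    - unfold Rdiv in Hn1. lra. }
  assert (Hsi : 1 <= sqrt (INR i)) by (rewrite <- sqrt_1; apply sqrt_le_1; lra).
  assert (H2s : 2 * s + 1 <= (2 * sqrt (/ p) + 1) * sqrt (INR i)).
  { pose proof (sqrt_pos (/p)). nra. }
  pose proof (bb_nonneg p n i ltac:(lra)) as Hbi.
  pose proof (Ha i) as Hai.
  assert (HK0 : 0 < K) by apply exp_pos.
  assert (Hs0 : 0 <= s) by apply sqrt_pos.
  assert (A1 : a i * (3/4) <= a i * (K * bb p n i * (2 * s + 1))) by (apply Rmult_le_compat_l; auto).
  assert (A2 : a i * (K * bb p n i * (2 * s + 1)) = (K * (2 * s + 1)) * (bb p n i * a i)) by ring.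
  assert (A3 : (K * (2 * s + 1)) * (bb p n i * a i) <= (K * (2 * s + 1)) * M)
    by (apply Rmult_le_compat_l; [nra| auto]).
  assert (HM0 : 0 < M) by (unfold M; pose proof (Rabs_pos l); lra).
  assert (A4 : (K * (2 * s + 1)) * M <= K * ((2 * sqrt (/ p) + 1) * sqrt (INR i)) * M).
  { apply Rmult_le_compat_r; [lra|]. apply Rmult_le_compat_l; lra. }
  unfold Cst. lra.
Qed.
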